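(* Let $\mathcal{A}$ be a finite alphabet and let $P$, $Q$, $R$ be probability mass functions on $\mathcal{A}$. Let $p_{\min}=\min_{a\in\mathcal{A}}P(a)$, $p_{\max}=\max_{a\in\mathcal{A}}P(a)$, $r_{\min}=\min_{a\in\mathcal{A}}R(a)$, $r_{\max}=\max_{a\in\mathcal{A}}R(a)$, and $d_1=\sum_{a\in\mathcal{A}}|P(a)-Q(a)|$. If $d_1<2p_{\min}$, then \[ D(Q\|R)-D(P\|R)\le \frac{d_1}{2}\log_2\!\left(\frac{p_{\max}+d_1/2}{p_{\min}-d_1/2}\cdot\frac{r_{\max}}{r_{\min}}\right). \]
   Context: $D(P\|R)=\sum_{a: P(a)>0}P(a)\log_2\frac{P(a)}{R(a)}$ is the informational divergence (Kullback–Leibler divergence in bits). *)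

(* Defs.v *)
From mathcomp Require Import all_boot all_order all_algebra.
From mathcomp Require Import all_classical all_reals all_analysis.
Set Implicit Arguments. Unset Strict Implicit. Unset Printing Implicit Defensive.
Import Order.TTheory GRing.Theory Num.Theory.
Local Open Scope ring_scope.

Section Defs.
Context {R : realType} {A : finType}.

Definition is_pmf (P : A -> R) : Prop :=
  (forall a, 0 <= P a) /\ \sum_(a : A) P a = 1.

Definition log2 (x : R) : R := ln x / ln 2.

Definition divergence (P Q : A -> R) : R :=
  \sum_(a : A | 0 < P a) P a * log2 (P a / Q a).

Definition fmin (f : A -> R) : R :=
  if [pick a : A] is Some a0 then \big[Num.min/f a0]_(a : A) f a else 0.
Definition fmax (f : A -> R) : R :=
  if [pick a : A] is Some a0 then \big[Num.max/f a0]_(a : A) f a else 0.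

Definition dist1 (P Q : A -> R) : R := \sum_(a : A) `|P a - Q a|.

End Defs.

(* Main.v *)
Require Import Defs.
From mathcomp Require Import all_boot all_order all_algebra.
From mathcomp Require Import all_classical all_reals all_analysis.
From mathcomp Require Import ring lra.
Import Order.TTheory GRing.Theory Num.Theory.
Local Open Scope ring_scope.

Lemma fmin_le {R : realType} {A : finType} (f : A -> R) a : fmin f <= f a.
Proof.
rewrite /fmin; case: pickP => [a0 _|/(_ a)//].
by rewrite (bigD1 a) //= ge_min lexx.
Qed.

Lemma fmax_ge {R : realType} {A : finType} (f : A -> R) a : f a <= fmax f.
Proof.
rewrite /fmax; case: pickP => [a0 _|/(_ a)//].
by rewrite (bigD1 a) //= le_max lexx.
Qed.

Lemma fmin_gt0 {R : realType} {A : finType} (f : A -> R) (a : A) :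
  (forall a, 0 < f a) -> 0 < fmin f.
Proof.
move=> h; rewrite /fmin; case: pickP => [a0 _|/(_ a)//].
elim/big_ind: _ => //= x y hx hy.
rewrite /Num.min; case: ifP => //.
Qed.

Lemma lerNnormr {R : realType} (x : R) : - x <= `|x|.
Proof. by rewrite -normrN ler_norm. Qed.

Theorem lemma1 (R : realType) (A : finType) (P Q Rd : A -> R)
  (hP : is_pmf P) (hQ : is_pmf Q) (hR : is_pmf Rd)
  (hRpos : forall a, 0 < Rd a)
  (hd : dist1 P Q < 2 * fmin P) :
  divergence Q Rd - divergence P Rd <=
  dist1 P Q / 2 *
    log2 ((fmax P + dist1 P Q / 2) / (fmin P - dist1 P Q / 2)
          * (fmax Rd / fmin Rd)).
Proof.
case: hP => hP0 hP1; case: hQ => hQ0 hQ1.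
set d := dist1 P Q in hd *.
have d0 : 0 <= d by rewrite /d /dist1 sumr_ge0.
set pmin := fmin P in hd *; set pmax := fmax P.
set rmin := fmin Rd; set rmax := fmax Rd.
have pm0 : 0 < pmin - d / 2 by lra.
have Ppos a : 0 < P a by have := fmin_le P a; rewrite -/pmin; lra.
pose D a := Q a - P a.
have sD : \sum_a D a = 0 by rewrite /D sumrB hQ1 hP1 subrr.
pose Dp a := (`|D a| + D a) / 2.
pose Dm a := (`|D a| - D a) / 2.
have sabs : \sum_a `|D a| = d.
  by rewrite /d /dist1; apply: eq_bigr => a _; rewrite /D distrC.
have sDp : \sum_a Dp a = d / 2 by rewrite /Dp -mulr_suml big_split /= sD addr0 sabs.
have sDm : \sum_a Dm a = d / 2.
  by rewrite /Dm -mulr_suml sumrB sD subr0 sabs.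
have Dp0 a : 0 <= Dp a by rewrite /Dp; have := lerNnormr (D a); lra.
have Dm0 a : 0 <= Dm a by rewrite /Dm; have := ler_norm (D a); lra.
have Dple a : Dp a <= d / 2.
  by rewrite -sDp (bigD1 a) //= lerDl sumr_ge0.
have Dmle a : Dm a <= d / 2.
  by rewrite -sDm (bigD1 a) //= lerDl sumr_ge0.
have Qlo a : pmin - d / 2 <= Q a.
  have := fmin_le P a; have := Dmle a; rewrite /Dm /D -/pmin.
  have := lerNnormr (Q a - P a); lra.
have Qhi a : Q a <= pmax + d / 2.
  have := fmax_ge P a; have := Dple a; rewrite /Dp /D -/pmax.
  have := ler_norm (Q a - P a); lra.
have Qpos a : 0 < Q a by have := Qlo a; lra.
have [a0 _] : exists a0 : A, true.
  move: hd; rewrite /pmin /fmin; case: pickP => [a0 _|_]; first by exists a0.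
  by rewrite mulr0 ltNge d0.
have rmin0 : 0 < rmin by apply: (fmin_gt0 _ a0).
have rmax0 : 0 < rmax by have := fmax_ge Rd a0; have := hRpos a0; rewrite -/rmax; lra.
have pmax0 : 0 < pmax + d / 2 by have := fmax_ge P a0; have := Ppos a0; rewrite -/pmax; lra.
pose g a := ln (Q a) - ln (Rd a).
pose U := ln (pmax + d / 2) - ln rmin.
pose L := ln (pmin - d / 2) - ln rmax.
have gL a : L <= g a.
  rewrite /L /g; have h1 : ln (pmin - d / 2) <= ln (Q a) by rewrite ler_ln ?posrE.
  have h2 : ln (Rd a) <= ln rmax by rewrite ler_ln ?posrE // fmax_ge.
  lra.
have gU a : g a <= U.
  rewrite /U /g; have h1 : ln (Q a) <= ln (pmax + d / 2) by rewrite ler_ln ?posrE.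
  have h2 : ln rmin <= ln (Rd a) by rewrite ler_ln ?posrE // fmin_le.
  lra.
have term a : Q a * ln (Q a / Rd a) - P a * ln (P a / Rd a) <= D a + D a * g a.
  rewrite !ln_div ?posrE //.
  have h : ln (Q a / P a) <= Q a / P a - 1.
    have := @le_ln1Dx R (Q a / P a - 1); rewrite addrCA subrr addr0; apply.
    have : 0 < Q a / P a by rewrite divr_gt0.
    lra.
  rewrite ln_div ?posrE // in h.
  have := ler_wpM2l (ltW (Ppos a)) h.
  have e : P a * (Q a / P a) = Q a by rewrite mulrC divfK // gt_eqF.
  rewrite /D /g => h'.
  nra.
have sum1 : \sum_a (Q a * ln (Q a / Rd a) - P a * ln (P a / Rd a))
    <= \sum_a D a * g a.
  apply: le_trans (ler_sum _ (fun a _ => term a)) _.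
  by rewrite big_split /= sD add0r.
have sum2 : \sum_a D a * g a <= d / 2 * (U - L).
  have -> : \sum_a D a * g a = \sum_a D a * (g a - L).
    under [RHS]eq_bigr do rewrite mulrBr.
    by rewrite sumrB -mulr_suml sD mul0r subr0.
  rewrite -sDp mulr_suml; apply: ler_sum => a _.
  have h1 := gL a; have h2 := gU a; have h3 := Dp0 a.
  have h4 : D a <= Dp a by rewrite /Dp; have := ler_norm (D a); lra.
  nra.
have ln2 : 0 < ln (2 : R) by rewrite ln_gt0 // ltr1n.
have dv (X : A -> R) : (forall a, 0 < X a) ->
    divergence X Rd = \sum_a X a * log2 (X a / Rd a).
  by move=> hX; rewrite /divergence; apply: eq_bigl => a; rewrite hX.
rewrite (dv Q Qpos) (dv P Ppos).
have -> : \sum_a Q a * log2 (Q a / Rd a) - \sum_a P a * log2 (P a / Rd a) =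
   (\sum_a (Q a * ln (Q a / Rd a) - P a * ln (P a / Rd a))) / ln 2.
  rewrite -sumrB mulr_suml; apply: eq_bigr => a _.
  by rewrite /log2 mulrBl !mulrA.
rewrite /log2 lnM ?posrE ?divr_gt0 // !ln_div ?posrE //.
rewrite mulrA ler_pM2r ?invr_gt0 //.
apply: le_trans sum1 _; apply: le_trans sum2 _.
rewrite le_eqVlt; apply/orP; left; apply/eqP; rewrite /U /L; ring.
Qed.
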